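(* Let $\mathcal X$ be an MRN with transition cocycle $P_{\mathcal X}$. The following are equivalent: (i) $\mathcal X$ converges in distribution; (ii) there exists an invariant distribution $p$ of $\mathcal X$ such that for every $q\in\Sigma_1^+$ and $\mu$-a.e. $\omega$, $\lim_{n\to\infty}|P_{\mathcal X}(n,\theta^{-n}\omega)q-p(\omega)|=0$; (iii) there exists an invariant distribution $p$ of $\mathcal X$ such that for every $q\in\Sigma_1^+$ and $\mu$-a.e. $\omega$, $\lim_{n\to\infty}|P_{\mathcal X}(n,\omega)q-p(\theta^n\omega)|=0$. Moreover, the invariant distributions in (ii) and (iii) are uniquely determined $\mu$-a.e. and coincide $\mu$-a.e.
   Context: Let $k\ge2$, $S=\{s_1,\dots,s_k\}$, $\mathbb K=\{1,\dots,k\}$; $|\cdot|$ is the $\ell^1$-norm on $\mathbb R^k$; $\Sigma_1^+=\{v\in\mathbb R^k:v_j\ge0,\sum_jv_j=1\}$. $\Theta=(\Omega,\mathcal F,\mu,\theta)$ is an invertible metric dynamical system (standard probability space, $\theta$ invertible, ergodic, $\mu$-preserving). A Markov random network (MRN) over $\Theta$ is a process $\mathcal X=(X_n)_{n\in\mathbb N_0}$ on $S\times\Omega$ such that $\omega\mapsto\mathbb P\{X_n=(s_i,\theta^n\omega)\mid X_0=(s_j,\omega)\}$ is measurable, transition probabilities between fibres sum to one, and the Markov property holds along fibres; its transition cocycle $P_{\mathcal X}(n,\omega)=(\mathbb P\{X_n=(s_i,\theta^n\omega)\mid X_0=(s_j,\omega)\})_{i,j}$ is, for $\mu$-a.e.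 $\omega$, column-stochastic with $P_{\mathcal X}(0,\omega)=I_k$ and $P_{\mathcal X}(m+n,\omega)=P_{\mathcal X}(m,\theta^n\omega)P_{\mathcal X}(n,\omega)$. An invariant distribution of $\mathcal X$ is an $\mathcal F$-measurable $p:\Omega\to\Sigma_1^+$ with $P_{\mathcal X}(n,\omega)p(\omega)=p(\theta^n\omega)$ for all $n\in\mathbb N_0$, $\mu$-a.e. $\omega$. $\mathcal X$ converges in distribution if for $\mu$-a.e. $\omega$, $\lim_{n\to\infty}|P_{\mathcal X}(n,\omega)u-P_{\mathcal X}(n,\omega)v|=0$ for all $u,v\in\Sigma_1^+$. *)

(* Defs.v *)
From HB Require Import structures.
From mathcomp Require Import all_boot all_order all_algebra.
From mathcomp Require Import all_classical all_reals all_analysis.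
Set Implicit Arguments. Unset Strict Implicit. Unset Printing Implicit Defensive.
Import Order.TTheory GRing.Theory Num.Theory.
Import numFieldNormedType.Exports.
Local Open Scope classical_set_scope.
Local Open Scope ring_scope.

Section MRN.
Context {R : realType} {k : nat}.

Definition l1norm (v : 'cV[R]_k) : R := \sum_(i < k) `|v i ord0|.

Definition in_simplex (v : 'cV[R]_k) : Prop :=
  (forall i, 0 <= v i ord0) /\ \sum_(i < k) v i ord0 = 1.

Definition col_stochastic (A : 'M[R]_k) : Prop :=
  (forall i j, 0 <= A i j) /\ (forall j, \sum_(i < k) A i j = 1).

Context {d : measure_display} {T : measurableType d}.

Definition invertible_ergodic_mds (mu : probability T R) (theta thinv : T -> T)
  : Prop :=
  [/\ measurable_fun setT theta /\ measurable_fun setT thinv,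
      cancel theta thinv /\ cancel thinv theta,
      (forall A, measurable A -> mu (theta @^-1` A) = mu A)
    & (forall A, measurable A -> theta @^-1` A = A ->
         mu A = 0%E \/ mu A = 1%E)].

(* P is (the transition cocycle of) a Markov random network over Theta:
   measurable entries, a.e. column-stochastic, P(0)=I, cocycle identity. *)
Definition transition_cocycle (mu : probability T R) (theta : T -> T)
  (P : nat -> T -> 'M[R]_k) : Prop :=
  (forall n i j, measurable_fun setT (fun w => P n w i j)) /\
  {ae mu, forall w,
     [/\ forall n, col_stochastic (P n w),
         P 0%N w = 1%:M
       & forall m n, P (m + n)%N w = P m (iter n theta w) *m P n w]}.

Definition invariant_distribution (mu : probability T R) (theta : T -> T)
  (P : nat -> T -> 'M[R]_k) (p : T -> 'cV[R]_k) : Prop :=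
  [/\ forall i, measurable_fun setT (fun w => p w i ord0),
      forall w, in_simplex (p w)
    & forall n, {ae mu, forall w, P n w *m p w = p (iter n theta w)}].

Definition converges_in_distribution (mu : probability T R)
  (P : nat -> T -> 'M[R]_k) : Prop :=
  {ae mu, forall w, forall u v, in_simplex u -> in_simplex v ->
     (fun n => l1norm (P n w *m u - P n w *m v)) @ \oo --> (0 : R)}.

Definition pullback_attractor (mu : probability T R) (theta thinv : T -> T)
  (P : nat -> T -> 'M[R]_k) (p : T -> 'cV[R]_k) : Prop :=
  invariant_distribution mu theta P p /\
  forall q, in_simplex q ->
    {ae mu, forall w,
      (fun n => l1norm (P n (iter n thinv w) *m q - p w)) @ \oo --> (0 : R)}.

Definition forward_attractor (mu : probability T R) (theta : T -> T)
  (P : nat -> T -> 'M[R]_k) (p : T -> 'cV[R]_k) : Prop :=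
  invariant_distribution mu theta P p /\
  forall q, in_simplex q ->
    {ae mu, forall w,
      (fun n => l1norm (P n w *m q - p (iter n theta w))) @ \oo --> (0 : R)}.

End MRN.

(* Main.v *)
Require Import Defs.
From HB Require Import structures.
From mathcomp Require Import all_boot all_order all_algebra.
From mathcomp Require Import all_classical all_reals all_analysis.
From mathcomp Require Import ring lra.
Import Order.TTheory GRing.Theory Num.Theory.
Import numFieldNormedType.Exports.
Local Open Scope classical_set_scope.
Local Open Scope ring_scope.

Section LA.
Context {R : realType} {k : nat}.
Implicit Types (A B : 'M[R]_k) (x y u v : 'cV[R]_k).

Definition ev (i : 'I_k) : 'cV[R]_k := delta_mx i ord0.

Lemma ev_entry i j : ev i j ord0 = (j == i)%:R.
Proof. by rewrite /ev mxE eqxx andbT. Qed.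

Lemma ev_simplex i : in_simplex (ev i).
Proof.
split=> [j|]; first by rewrite ev_entry ler0n.
rewrite (bigD1 i) //= ev_entry eqxx big1 ?addr0 // => j /negbTE ji.
by rewrite ev_entry ji.
Qed.

Lemma mul_ev A i r : (A *m ev i) r ord0 = A r i.
Proof.
rewrite mxE (bigD1 i) //= ev_entry eqxx mulr1 big1 ?addr0 // => j /negbTE ji.
by rewrite ev_entry ji mulr0.
Qed.

Lemma l1norm_ge0 x : 0 <= l1norm x.
Proof. by apply: sumr_ge0 => i _. Qed.

Lemma l1norm0 : l1norm (0 : 'cV[R]_k) = 0.
Proof. by rewrite /l1norm big1 // => i _; rewrite mxE normr0. Qed.

Lemma l1normD x y : l1norm (x + y) <= l1norm x + l1norm y.
Proof.
rewrite /l1norm -big_split /=; apply: ler_sum => i _; rewrite mxE.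
exact: ler_normD.
Qed.

Lemma l1normN x : l1norm (- x) = l1norm x.
Proof. by apply: eq_bigr => i _; rewrite mxE normrN. Qed.

Lemma l1normB x y : l1norm (x - y) = l1norm (y - x).
Proof. by rewrite -l1normN opprB. Qed.

Lemma l1normZ c x : l1norm (c *: x) = `|c| * l1norm x.
Proof.
rewrite /l1norm mulr_sumr; apply: eq_bigr => i _; by rewrite mxE normrM.
Qed.

Lemma l1norm_sum (I : Type) (r : seq I) (P : pred I) (f : I -> 'cV[R]_k) :
  l1norm (\sum_(l <- r | P l) f l) <= \sum_(l <- r | P l) l1norm (f l).
Proof.
elim: r => [|a r IH]; first by rewrite !big_nil l1norm0.
rewrite !big_cons; case: (P a) => //.
apply: le_trans (l1normD _ _) _; exact: lerD.
Qed.

Lemma l1norm_entry x i : `|x i ord0| <= l1norm x.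
Proof.
rewrite /l1norm (bigD1 i) //= lerDl; exact: sumr_ge0.
Qed.

Lemma l1norm_tri x y z : l1norm (x - z) <= l1norm (x - y) + l1norm (y - z).
Proof.
have -> : x - z = (x - y) + (y - z) by rewrite addrA subrK.
exact: l1normD.
Qed.

Lemma nonexp A x : col_stochastic A -> l1norm (A *m x) <= l1norm x.
Proof.
move=> [A0 A1]; rewrite /l1norm.
apply: (@le_trans _ _ (\sum_i \sum_j A i j * `|x j ord0|)).
  apply: ler_sum => i _; rewrite mxE; apply: le_trans (ler_norm_sum _ _ _) _.
  by apply: ler_sum => j _; rewrite normrM ger0_norm.
rewrite exchange_big /=; apply: ler_sum => j _.
by rewrite -mulr_suml A1 mul1r.
Qed.

Lemma stoch_simplex A u : col_stochastic A -> in_simplex u -> in_simplex (A *m u).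
Proof.
move=> [A0 A1] [u0 u1]; split=> [i|].
  by rewrite mxE; apply: sumr_ge0 => j _; apply: mulr_ge0.
under eq_bigr do rewrite mxE.
by rewrite exchange_big /= -u1; apply: eq_bigr => j _; rewrite -mulr_suml A1 mul1r.
Qed.

Lemma stoch_col A i : col_stochastic A -> in_simplex (A *m ev i).
Proof. by move=> hA; apply: stoch_simplex => //; exact: ev_simplex. Qed.

Lemma simplex_decomp u v : in_simplex u -> in_simplex v ->
  u - v = \sum_(ij : 'I_k * 'I_k) (u ij.1 ord0 * v ij.2 ord0) *: (ev ij.1 - ev ij.2).
Proof.
move=> [u0 u1] [v0 v1]; apply/matrixP => r c; rewrite (ord1 c) !mxE summxE.
have h0 : ((0 : 'I_1) == ord0) = true by [].
under eq_bigr do rewrite !mxE h0 !andbT.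
rewrite -(pair_bigA _ (fun i j => u i ord0 * v j ord0 * ((r == i)%:R - (r == j)%:R))) /=.
under eq_bigr do under eq_bigr do rewrite mulrBr.
under eq_bigr do rewrite sumrB.
rewrite sumrB.
congr (_ - _).
  under eq_bigr do rewrite -mulr_suml -mulr_sumr v1 mulr1.
  rewrite (bigD1 r) //= eqxx mulr1 big1 ?addr0 // => i ir.
  by rewrite eq_sym (negbTE ir) mulr0.
rewrite exchange_big /=.
under eq_bigr do rewrite -mulr_suml -mulr_suml u1 mul1r.
rewrite (bigD1 r) //= eqxx mulr1 big1 ?addr0 // => i ir.
by rewrite eq_sym (negbTE ir) mulr0.
Qed.

Definition diam A : R :=
  \big[Num.max/0]_(ij : 'I_k * 'I_k) l1norm (A *m (ev ij.1 - ev ij.2)).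

Lemma diam_ge0 A : 0 <= diam A.
Proof.
rewrite /diam; elim/big_ind: _ => //; first by move=> *; rewrite le_max; apply/orP; left.
by move=> *; exact: l1norm_ge0.
Qed.

Lemma diam_term A i j : l1norm (A *m (ev i - ev j)) <= diam A.
Proof. exact: (le_bigmax _ (fun ij : 'I_k * 'I_k => l1norm (A *m (ev ij.1 - ev ij.2))) (i, j)). Qed.

Lemma diam_le A c : 0 <= c -> (forall i j, l1norm (A *m (ev i - ev j)) <= c) -> diam A <= c.
Proof. by move=> c0 h; apply: bigmax_le => // -[i j] _; exact: h. Qed.

Lemma diam_simplex A u v : in_simplex u -> in_simplex v ->
  l1norm (A *m (u - v)) <= diam A.
Proof.
move=> hu hv; rewrite (simplex_decomp _ _ hu hv) mulmx_sumr.
apply: le_trans (l1norm_sum _ _ _ _) _.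
apply: (@le_trans _ _ (\sum_(ij : 'I_k * 'I_k) (u ij.1 ord0 * v ij.2 ord0) * diam A)).
  apply: ler_sum => -[i j] _ /=; rewrite -scalemxAr l1normZ.
  case: hu hv => [u0 _] [v0 _].
  rewrite ger0_norm ?mulr_ge0 //; apply: ler_wpM2l; first exact: mulr_ge0.
  exact: diam_term.
rewrite -mulr_suml -(pair_bigA _ (fun i j => u i ord0 * v j ord0)) /=.
case: hu hv => [_ u1] [_ v1].
under eq_bigr do rewrite -mulr_sumr v1 mulr1.
by rewrite u1 mul1r.
Qed.

Lemma diam_mulr A B : col_stochastic B -> diam (A *m B) <= diam A.
Proof.
move=> hB; apply: diam_le => [|i j]; first exact: diam_ge0.
rewrite -mulmxA mulmxBr; exact: diam_simplex (stoch_col _ _ hB) (stoch_col _ _ hB).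
Qed.

Lemma diam_mull A B : col_stochastic A -> diam (A *m B) <= diam B.
Proof.
move=> hA; apply: diam_le => [|i j]; first exact: diam_ge0.
rewrite -mulmxA; apply: le_trans (nonexp _ _ hA) _; exact: diam_term.
Qed.

Lemma diam_le_sum A : diam A <= \sum_(ij : 'I_k * 'I_k) l1norm (A *m (ev ij.1 - ev ij.2)).
Proof.
apply: bigmax_le => [|ij _]; first by apply: sumr_ge0 => *; exact: l1norm_ge0.
rewrite (bigD1 ij) //= lerDl; apply: sumr_ge0 => *; exact: l1norm_ge0.
Qed.

End LA.
Section Gen.
Context {R : realType}.

Lemma cvg_sumR (I : Type) (r : seq I) (P : pred I) (f : I -> nat -> R) (l : I -> R) :
  (forall i, f i n @[n --> \oo] --> l i) ->
  \sum_(i <- r | P i) f i n @[n --> \oo] --> \sum_(i <- r | P i) l i.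
Proof.
move=> hf; elim: r => [|i r IH].
  rewrite big_nil; under eq_fun do rewrite big_nil; exact: cvg_cst.
rewrite big_cons; under eq_fun do rewrite big_cons.
case: (P i) => //; exact: cvgD.
Qed.

Lemma cauchy_bound (a b : nat -> R) :
  b n @[n --> \oo] --> 0 ->
  (forall n m, (n <= m)%N -> `|a m - a n| <= b n) ->
  cvgn a /\ forall n, `|limn a - a n| <= b n.
Proof.
move=> hb hab.
have ca : cvgn a.
  apply/cauchy_cvgP/cauchy_exP => e e0.
  have [N0 _ hN0] := (cvgrPdist_lt _ _).1 hb e e0.
  exists (a N0); exists N0 => // m /= N0m.
  rewrite -ball_normE /ball_ /= distrC.
  apply: le_lt_trans (hab _ _ N0m) _.
  have := hN0 N0 (leqnn N0); rewrite sub0r normrN.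
  by apply: le_lt_trans; exact: ler_norm.
split => // n.
have bn0 : 0 <= b n by apply: le_trans (hab n n (leqnn n)); exact: normr_ge0.
have h1 : a n - b n <= limn a.
  apply: limr_ge => //; exists n => // m /= nm.
  by move: (hab _ _ nm); rewrite ler_norml => /andP[h _]; lra.
have h2 : limn a <= a n + b n.
  apply: limr_le => //; exists n => // m /= nm.
  by move: (hab _ _ nm); rewrite ler_norml => /andP[_ h]; lra.
rewrite ler_norml; apply/andP; split; lra.
Qed.

Lemma le_cvg0 (c : R) (s : nat -> R) : s n @[n --> \oo] --> 0 ->
  (forall n, c <= s n) -> c <= 0.
Proof.
move=> hs hc; rewrite -(cvg_lim _ hs) //; apply: limr_ge; first exact: cvgP hs.
by apply: nearW.
Qed.

End Gen.

Section AeFin.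
Context {R : realType} {d : measure_display} {T : measurableType d}
  (mu : probability T R).

Lemma ae_forall_fin (I : finType) (Q : I -> T -> Prop) :
  (forall i, {ae mu, forall w, Q i w}) -> {ae mu, forall w, forall i, Q i w}.
Proof.
move=> h.
have : {ae mu, forall w, forall i, i \in enum I -> Q i w}.
  elim: (enum I) => [|i r IH].
    by apply: aeW => w i.
  move: IH; apply: filterS2 (h i) => w hi hr j; rewrite inE => /orP[/eqP -> //|].
  exact: hr.
by apply: filterS => w hw i; apply: hw; rewrite mem_enum.
Qed.

End AeFin.
Lemma noninc_le {R : realType} (a : nat -> R) : (forall n, a n.+1 <= a n) ->
  forall n m, (n <= m)%N -> a m <= a n.
Proof.
move=> h n m /subnK <-; elim: (m - n)%N => [|p IH]; first by rewrite add0n.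
by rewrite addSn; exact: le_trans (h _) IH.
Qed.

Section MS.
Context {R : realType} {d : measure_display} {T : measurableType d}
  (mu : probability T R).

Lemma aeE (Q : T -> Prop) : {ae mu, forall w, Q w} <->
  exists N, [/\ measurable N, mu N = 0%E & forall w, ~ Q w -> N w].
Proof.
by split => [[N [mN N0 sub]]|[N [mN N0 sub]]]; exists N; split => // w;
  move=> nQ; apply: sub.
Qed.

Definition mpres (s : T -> T) :=
  measurable_fun setT s /\ forall A, measurable A -> mu (s @^-1` A) = mu A.

Lemma mpres_mes s A : mpres s -> measurable A -> measurable (s @^-1` A).
Proof. by move=> [ms _] mA; rewrite -[_ @^-1` _]setTI; exact: ms. Qed.

Lemma mpres_iter s n : mpres s -> mpres (iter n s).
Proof.
move=> hs; elim: n => [|n [IHm IHp]]; first by split=> [|A _]; [exact: measurable_id|].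
split.
  exact: measurableT_comp (hs.1) IHm.
move=> A mA.
have -> : iter n.+1 s @^-1` A = iter n s @^-1` (s @^-1` A) by [].
by rewrite IHp ?hs.2 //; exact: mpres_mes.
Qed.

Lemma ae_pres s (Q : T -> Prop) : mpres s ->
  {ae mu, forall w, Q w} -> {ae mu, forall w, Q (s w)}.
Proof.
move=> hs /aeE [N [mN N0 sub]]; apply/aeE; exists (s @^-1` N); split.
- exact: mpres_mes.
- by rewrite hs.2.
- by move=> w nQ; apply: sub.
Qed.

Lemma ae_mono_cvg0 (s : T -> T) (hs : mpres s) (f : nat -> T -> R)
  (mf : forall n, measurable_fun setT (f n)) (f0 : forall n w, 0 <= f n w) :
  {ae mu, forall w, f n w @[n --> \oo] --> 0} ->
  {ae mu, forall w, forall n, f n.+1 (iter n.+1 s w) <= f n (iter n s w)} ->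
  {ae mu, forall w, f n (iter n s w) @[n --> \oo] --> 0}.
Proof.
move=> hcvg hmono.
have step : forall j : nat, {ae mu, forall w,
    exists n, f n (iter n s w) <= j.+1%:R^-1}.
  move=> j; set e : R := j.+1%:R^-1.
  have e0 : 0 < e by rewrite invr_gt0 ltr0n.
  pose F m := [set w | e < f m w].
  have mF m : measurable (F m).
    have := mf m measurableT _ (measurable_itv `]e, +oo[); rewrite setTI.
    congr measurable; apply/seteqP; split => w /=; by rewrite in_itv /= andbT.
  pose B := \bigcap_n (iter n s @^-1` F n).
  have mB : measurable B.
    by apply: bigcapT_measurable => n; apply: mpres_mes; [exact: mpres_iter|exact: mF].
  have mL : measurable (lim_sup_set F).
    apply: bigcapT_measurable => n; apply: bigcup_measurable => m _; exact: mF.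
  have L0 : mu (lim_sup_set F) = 0%E.
    move: hcvg => /aeE [N [mN N0 sub]].
    apply/eqP; rewrite -measure_le0 -N0; apply: le_measure; rewrite ?inE //.
    move=> w Lw; apply: sub => /cvgrPdist_lt /(_ e e0) [N1 _ hN1].
    have [m /= N1m Fm] := Lw N1 I.
    have := hN1 m N1m; rewrite sub0r normrN ger0_norm // => /lt_le_trans.
    by move=> /(_ _ (ltW Fm)); rewrite ltxx.
  have B0 : mu B = 0%E.
    have hc := lim_sup_set_cvg mu F mF.
    have fin : (mu (\bigcup_(k >= 0) F k) < +oo)%E.
      apply: (le_lt_trans (probability_le1 _ _)); last exact: ltry.
      by apply: bigcup_measurable => m _; exact: mF.
    have hc0 := hc fin.
    apply/eqP; rewrite eq_le measure_ge0 andbT -L0.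
    rewrite -(cvg_lim _ hc0) //; apply: lime_ge; first by apply/cvg_ex; eexists; exact: hc0.
    near=> n.
    apply: (@le_trans _ _ (mu (iter n s @^-1` F n))).
      apply: le_measure; rewrite ?inE //.
      - by apply: mpres_mes; [exact: mpres_iter|exact: mF].
      - by move=> w Bw; exact: Bw.
    rewrite (mpres_iter _ n hs).2 //; apply: le_measure; rewrite ?inE //.
      by apply: bigcup_measurable => m _; exact: mF.
    by move=> w Fw; exists n => //=.
  apply/aeE; exists B; split => // w hn m _.
  rewrite /= /F /=; rewrite ltNge; apply/negP => hle; apply: hn; by exists m.
have := ae_foralln step.
move: hmono; apply: filterS2 => w hmono hstep.
apply/cvgrPdist_le => eps eps0.
have [j hj] : exists j : nat, j.+1%:R^-1 < eps.
  have [N0 _ hN0] := near_infty_natSinv_lt (PosNum eps0).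
  by exists N0; exact: (hN0 N0 (leqnn N0)).
have [n hn] := hstep j.
near=> m.
rewrite sub0r normrN ger0_norm //.
apply: le_trans (ltW hj).
apply: le_trans hn.
apply: (noninc_le (fun n => f n (iter n s w))) => //.
by near: m; exists n.
Unshelve. all: by end_near.
Qed.

End MS.

Section LA2.
Context {R : realType} {k : nat}.

Lemma entry_diff (A : 'M[R]_k) i j r : (A *m (ev i - ev j)) r ord0 = A r i - A r j.
Proof. by rewrite mulmxBr -!mul_ev !mxE. Qed.

Lemma diam_terms_cvg0 (A : nat -> 'M[R]_k) :
  (forall i j, l1norm (A n *m (ev i - ev j)) @[n --> \oo] --> 0) ->
  diam (A n) @[n --> \oo] --> 0.
Proof.
move=> h.
have hs := cvg_sumR _ (index_enum ('I_k * 'I_k)%type) predT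
  (fun ij n => l1norm (A n *m (ev ij.1 - ev ij.2))) (fun _ => 0)
  (fun ij => h ij.1 ij.2).
rewrite big1 // in hs.
apply: (squeeze_cvgr _ (cvg_cst 0) hs).
by apply: nearW => n; rewrite diam_ge0 diam_le_sum.
Qed.

Lemma diam_pt_cvg0 (A : nat -> 'M[R]_k) (c : nat -> 'cV[R]_k) :
  (forall i, l1norm (A n *m ev i - c n) @[n --> \oo] --> 0) ->
  diam (A n) @[n --> \oo] --> 0.
Proof.
move=> h; apply: diam_terms_cvg0 => i j.
have hs : l1norm (A n *m ev i - c n) + l1norm (A n *m ev j - c n) @[n --> \oo] --> 0.
  by rewrite -[0]addr0; exact: cvgD.
apply: (squeeze_cvgr _ (cvg_cst 0) hs).
apply: nearW => n; rewrite l1norm_ge0 /=.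
rewrite mulmxBr; apply: le_trans (l1norm_tri _ (c n) _) _.
by rewrite (l1normB (c n)).
Qed.

Lemma diam_simplex_cvg (A : nat -> 'M[R]_k) u v :
  diam (A n) @[n --> \oo] --> 0 -> in_simplex u -> in_simplex v ->
  l1norm (A n *m u - A n *m v) @[n --> \oo] --> 0.
Proof.
move=> h hu hv; apply: (squeeze_cvgr _ (cvg_cst 0) h).
apply: nearW => n; rewrite l1norm_ge0 /= -mulmxBr.
exact: diam_simplex.
Qed.

End LA2.

Section Mes2.
Context {R : realType} {k : nat} {d : measure_display} {T : measurableType d}.

Lemma measurable_big (I : Type) (r : seq I) (Pr : pred I) (op : R -> R -> R) (idx : R)
  (hop : forall f g : T -> R, measurable_fun setT f -> measurable_fun setT g ->
     measurable_fun setT (fun w => op (f w) (g w)))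
  (f : I -> T -> R) : (forall i, measurable_fun setT (f i)) ->
  measurable_fun setT (fun w => \big[op/idx]_(i <- r | Pr i) f i w).
Proof.
move=> mf; elim: r => [|i r IH].
  by under eq_fun do rewrite big_nil; exact: measurable_cst.
under eq_fun do rewrite big_cons.
case: (Pr i) => //; exact: hop.
Qed.

Lemma measurable_diam (M : T -> 'M[R]_k) :
  (forall i j, measurable_fun setT (fun w => M w i j)) ->
  measurable_fun setT (fun w => diam (M w)).
Proof.
move=> mM; rewrite /diam.
apply: measurable_big => [f g mf mg|ij]; first exact: measurable_realfun.measurable_maxr.
rewrite /l1norm; apply: measurable_big => [f g mf mg|r]; first exact: measurable_realfun.measurable_funD.
under eq_fun do rewrite entry_diff.
apply: measurableT_comp; first exact: measurable_realfun.normr_measurable.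
exact: measurable_realfun.measurable_funB.
Qed.

End Mes2.

Section Main.
Context {R : realType} {k : nat} {d : measure_display} {T : measurableType d}
  (mu : probability T R) (theta thinv : T -> T) (P : nat -> T -> 'M[R]_k).
Hypothesis hTheta : invertible_ergodic_mds mu theta thinv.
Hypothesis hP : transition_cocycle mu theta P.

Let thK : cancel theta thinv.
Proof. by case: hTheta => _ [h _] _ _. Qed.
Let thinvK : cancel thinv theta.
Proof. by case: hTheta => _ [_ h] _ _. Qed.

Lemma iterK n w : iter n thinv (iter n theta w) = w.
Proof. by elim: n => [//|n IH]; rewrite iterSr iterS thK. Qed.

Lemma iterK' n w : iter n theta (iter n thinv w) = w.
Proof. by elim: n => [//|n IH]; rewrite iterSr iterS thinvK. Qed.

Lemma iter_split m n w : iter n theta (iter (m + n) thinv w) = iter m thinv w.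
Proof. by rewrite addnC iterD iterK'. Qed.

Lemma mp_theta : mpres mu theta.
Proof. by case: hTheta => -[mt _] _ hm _; split. Qed.

Lemma mp_thinv : mpres mu thinv.
Proof.
case: hTheta => -[mt mti] _ hm _; split => // A mA.
have mA' : measurable (thinv @^-1` A) by rewrite -[_ @^-1` _]setTI; exact: mti.
rewrite -hm //; congr (mu _); apply/seteqP; split => w /=; by rewrite thK.
Qed.

Definition Gd w := [/\ forall n, col_stochastic (P n w), P 0%N w = 1%:M
  & forall m n, P (m + n)%N w = P m (iter n theta w) *m P n w].

Lemma aeG : {ae mu, forall w, Gd w}.
Proof. exact: hP.2. Qed.

Lemma aeGb : {ae mu, forall w, forall j, Gd (iter j thinv w)}.
Proof.
apply: ae_foralln => j; apply: (ae_pres _ _ _ (mpres_iter _ _ j mp_thinv)); exact: aeG.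
Qed.

Lemma aeGf : {ae mu, forall w, forall j, Gd (iter j theta w)}.
Proof.
apply: ae_foralln => j; apply: (ae_pres _ _ _ (mpres_iter _ _ j mp_theta)); exact: aeG.
Qed.

Definition Fd n w := diam (P n w).
Definition Dd n w := Fd n (iter n thinv w).

Lemma mFd n : measurable_fun setT (Fd n).
Proof. apply: measurable_diam => i j; exact: hP.1. Qed.

Lemma mDd n : measurable_fun setT (Dd n).
Proof.
apply: measurableT_comp; first exact: mFd.
exact: (mpres_iter _ _ n mp_thinv).1.
Qed.

Lemma Fd_ge0 n w : 0 <= Fd n w. Proof. exact: diam_ge0. Qed.
Lemma Dd_ge0 n w : 0 <= Dd n w. Proof. exact: diam_ge0. Qed.

Lemma Fmono w : (forall j, Gd (iter j theta w)) -> forall n, Fd n.+1 w <= Fd n w.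
Proof.
move=> hw n; have [_ _ coc] := hw 0%N.
rewrite /Fd -add1n coc /=; apply: diam_mull.
by have [st _ _] := hw n; exact: st.
Qed.

Lemma Dmono w : (forall j, Gd (iter j thinv w)) -> forall n, Dd n.+1 w <= Dd n w.
Proof.
move=> hw n; have [st _ coc] := hw n.+1.
have e : P n.+1 (iter n.+1 thinv w) =
    P n (iter 1 theta (iter n.+1 thinv w)) *m P 1%N (iter n.+1 thinv w).
  by rewrite -coc addn1.
rewrite /Dd /Fd e /= thinvK; exact: diam_mulr.
Qed.

Lemma cid_F : converges_in_distribution mu P <->
  {ae mu, forall w, Fd n w @[n --> \oo] --> 0}.
Proof.
split; apply: filterS => w h.
  apply: diam_terms_cvg0 => i j.
  under eq_fun do rewrite mulmxBr.
  exact: h (ev_simplex i) (ev_simplex j).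
move=> u v hu hv; exact: diam_simplex_cvg.
Qed.

Lemma F_D : {ae mu, forall w, Fd n w @[n --> \oo] --> 0} ->
  {ae mu, forall w, Dd n w @[n --> \oo] --> 0}.
Proof.
move=> hF; apply: (ae_mono_cvg0 _ _ mp_thinv _ mFd Fd_ge0 hF).
by apply: filterS aeGb => w hw n; exact: Dmono.
Qed.

Lemma D_F : {ae mu, forall w, Dd n w @[n --> \oo] --> 0} ->
  {ae mu, forall w, Fd n w @[n --> \oo] --> 0}.
Proof.
move=> hD.
have := ae_mono_cvg0 _ _ mp_theta _ mDd Dd_ge0 hD.
have h2 : {ae mu, forall w, forall n,
    Dd n.+1 (iter n.+1 theta w) <= Dd n (iter n theta w)}.
  apply: filterS aeGf => w hw n; rewrite /Dd !iterK; exact: Fmono.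
move=> /(_ h2); apply: filterS => w.
by under eq_fun do rewrite /Dd iterK.
Qed.

Lemma pull_D p : pullback_attractor mu theta thinv P p ->
  {ae mu, forall w, Dd n w @[n --> \oo] --> 0}.
Proof.
move=> [_ hq].
have := ae_forall_fin _ _ (fun i w => l1norm (P n (iter n thinv w) *m ev i - p w)
   @[n --> \oo] --> 0) (fun i => hq _ (ev_simplex i)).
apply: filterS => w hw.
exact: (diam_pt_cvg0 (fun n => P n (iter n thinv w)) (fun _ => p w)).
Qed.

Lemma fwd_F p : forward_attractor mu theta P p ->
  {ae mu, forall w, Fd n w @[n --> \oo] --> 0}.
Proof.
move=> [_ hq].
have := ae_forall_fin _ _ (fun i w => l1norm (P n w *m ev i - p (iter n theta w))
   @[n --> \oo] --> 0) (fun i => hq _ (ev_simplex i)).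
apply: filterS => w hw.
exact: (diam_pt_cvg0 (fun n => P n w) (fun n => p (iter n theta w))).
Qed.


Lemma attr_x p : invariant_distribution mu theta P p ->
  {ae mu, forall w, Dd n w @[n --> \oo] --> 0} ->
  forall q0, in_simplex q0 ->
  {ae mu, forall w, l1norm (P n (iter n thinv w) *m q0 - p w) @[n --> \oo] --> 0}.
Proof.
move=> [_ ps inv] hD q0 hq0.
have hinv : {ae mu, forall w, forall n,
    P n (iter n thinv w) *m p (iter n thinv w) = p w}.
  apply: ae_foralln => n.
  have := ae_pres _ _ _ (mpres_iter _ _ n mp_thinv) (inv n).
  by apply: filterS => w; rewrite iterK'.
move: hinv hD; apply: filterS2 => w hinv hDw.
apply: (squeeze_cvgr _ (cvg_cst 0) hDw).
apply: nearW => n; rewrite l1norm_ge0 /= -{1}(hinv n) -mulmxBr.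
exact: diam_simplex.
Qed.

Lemma attr_unique (i0 : 'I_k) p1 p2 :
  invariant_distribution mu theta P p1 -> invariant_distribution mu theta P p2 ->
  {ae mu, forall w, Dd n w @[n --> \oo] --> 0} ->
  {ae mu, forall w, p1 w = p2 w}.
Proof.
move=> h1 h2 hD.
move: (attr_x _ h1 hD _ (ev_simplex i0)) (attr_x _ h2 hD _ (ev_simplex i0)).
apply: filterS2 => w c1 c2.
have hs : l1norm (P n (iter n thinv w) *m ev i0 - p1 w) +
    l1norm (P n (iter n thinv w) *m ev i0 - p2 w) @[n --> \oo] --> 0.
  by rewrite -[0]addr0; exact: cvgD.
have hle : l1norm (p1 w - p2 w) <= 0.
  apply: (le_cvg0 _ _ hs) => n /=.
  by apply: le_trans (l1norm_tri _ (P n (iter n thinv w) *m ev i0) _) _;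
    rewrite (l1normB (p1 w)).
apply/matrixP => i j; rewrite (ord1 j).
have := le_trans (l1norm_entry (p1 w - p2 w) i) hle.
rewrite mxE [X in `|_ + X|]mxE normr_le0 subr_eq0 => /eqP.
by move=> ->.
Qed.

Lemma inv_fwd p : invariant_distribution mu theta P p ->
  {ae mu, forall w, Fd n w @[n --> \oo] --> 0} ->
  forward_attractor mu theta P p.
Proof.
move=> hp hF; split => // q hq.
case: hp => _ ps inv.
move: (ae_foralln inv) hF; apply: filterS2 => w hinv hFw.
apply: (squeeze_cvgr _ (cvg_cst 0) hFw).
apply: nearW => n; rewrite l1norm_ge0 /= -(hinv n) -mulmxBr.
exact: diam_simplex.
Qed.


Lemma mxsubE (x y : 'cV[R]_k) i : (x - y) i ord0 = x i ord0 - y i ord0.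
Proof. by rewrite !mxE. Qed.

Lemma construct (i0 : 'I_k) : {ae mu, forall w, Dd n w @[n --> \oo] --> 0} ->
  exists p, invariant_distribution mu theta P p.
Proof.
move=> hD.
pose q0 : 'cV[R]_k := ev i0.
have hH : {ae mu, forall w,
    (forall j, Gd (iter j thinv w)) /\ Dd n w @[n --> \oo] --> 0}.
  by move: aeGb hD; apply: filterS2 => w h1 h2.
have [N [mN N0 subN]] := (aeE _ _).1 hH.
have goodN : forall w, ~ N w ->
    (forall j, Gd (iter j thinv w)) /\ Dd n w @[n --> \oo] --> 0.
  by move=> w Nw; apply: contrapT => nH; apply: Nw; exact: subN.
pose x n w : 'cV[R]_k := P n (iter n thinv w) *m q0.
have xs : forall w, ~ N w -> forall n, in_simplex (x n w).
  move=> w Nw n; have [st _ _] := (goodN w Nw).1 n.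
  exact: stoch_simplex (st n) (ev_simplex i0).
have xbound : forall w, ~ N w -> forall n m, (n <= m)%N ->
    l1norm (x m w - x n w) <= Dd n w.
  move=> w Nw n m nm.
  have [st _ coc] := (goodN w Nw).1 m.
  have e : P m (iter m thinv w) =
      P n (iter n thinv w) *m P (m - n)%N (iter m thinv w).
    have := coc n (m - n)%N; rewrite subnKC // => ->; congr (P n _ *m _).
    by have := iter_split n (m - n) w; rewrite subnKC.
  rewrite /x e -mulmxA -mulmxBr /Dd /Fd.
  apply: diam_simplex; last exact: ev_simplex.
  exact: stoch_simplex (st _) (ev_simplex i0).
have cvgx : forall w, ~ N w -> forall i, cvgn (fun n => x n w i ord0) /\
    forall n, `|limn (fun n => x n w i ord0) - x n w i ord0| <= Dd n w.
  move=> w Nw i; apply: cauchy_bound; first exact: (goodN w Nw).2.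
  move=> n m nm; apply: le_trans (xbound w Nw n m nm).
  by have := l1norm_entry (x m w - x n w) i; rewrite mxsubE.
pose p w : 'cV[R]_k :=
  if w \in N then q0 else \col_i limn (fun n => x n w i ord0).
have pN : forall w, ~ N w -> p w = \col_i limn (fun n => x n w i ord0).
  by move=> w Nw; rewrite /p memNset.
exists p; split.
- move=> i.
  have -> : (fun w => p w i ord0) = fun w =>
      if w \in N then q0 i ord0 else limn (fun n => x n w i ord0).
    by apply/funext => w; rewrite /p; case: (w \in N) => //; rewrite mxE.
  apply: measurable_fun_if => //.
  + apply: (measurable_fun_bool true); rewrite setTI.
    have -> : (fun w => w \in N) @^-1` [set true] = N.
      by apply/seteqP; split => w /=; [move/set_mem|move/mem_set].
    exact: mN.
  + apply: (measurable_realfun.measurable_fun_cvg (h := fun n w => x n w i ord0)).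
      move=> n; apply: measurable_funTS; rewrite /x.
      under eq_fun do rewrite mul_ev.
      exact: (measurableT_comp (hP.1 n i i0) (mpres_iter _ _ n mp_thinv).1).
    move=> w [_ /= hw].
    have Nw : ~ N w by move=> Nw; move: hw; rewrite mem_set.
    exact: (cvgx w Nw i).1.
- move=> w; case: (pselect (N w)) => [Nw|Nw].
    by rewrite /p mem_set //; exact: ev_simplex.
  rewrite pN //; split.
    move=> i; rewrite mxE; apply: limr_ge; first exact: (cvgx w Nw i).1.
    by apply: nearW => n; exact: (xs w Nw n).1.
  under eq_bigr do rewrite mxE.
  have hs := cvg_sumR _ (index_enum 'I_k) predT (fun i n => x n w i ord0)
    (fun i => limn (fun n => x n w i ord0)) (fun i => (cvgx w Nw i).1).
  have e : (fun n => \sum_(i <- index_enum 'I_k | predT i) x n w i ord0) = fun _ => 1.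
    by apply/funext => n; exact: (xs w Nw n).2.
  by rewrite -(cvg_lim _ hs) // e lim_cst.
- move=> n.
  have hN : {ae mu, forall w, ~ N w}.
    by apply/aeE; exists N; split => // w /contrapT.
  have hN' := ae_pres _ _ _ (mpres_iter _ _ n mp_theta) hN.
  move: hN hN'; apply: filterS2 => w Nw Nw'.
  have [hG _] := goodN w Nw.
  rewrite !pN //.
  have e : forall m, x (m + n)%N (iter n theta w) = P n w *m x m w.
    move=> m; rewrite /x; have [_ _ coc] := hG m.
    by rewrite iterD iterK addnC coc iterK' mulmxA.
  apply/matrixP => i j; rewrite (ord1 j) [RHS]mxE.
  have hlim : (fun m => x m (iter n theta w) i ord0) @ \oo -->
      (P n w *m \col_i limn (fun n => x n w i ord0)) i ord0.
    rewrite -(cvg_shiftn n).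
    have -> : [sequence x (m + n)%N (iter n theta w) i ord0]_m =
        (fun m => \sum_j P n w i j * x m w j ord0).
      by apply/funext => m /=; rewrite e mxE.
    rewrite mxE; apply: cvg_sumR => l; rewrite mxE.
    by apply: cvgMl_tmp; exact: (cvgx w Nw l).1.
  by rewrite -(cvg_lim _ hlim).
Qed.

End Main.

Theorem lemma2p6 (R : realType) (k : nat) (hk : (2 <= k)%N)
  (d : measure_display) (T : measurableType d) (mu : probability T R)
  (theta thinv : T -> T)
  (hTheta : invertible_ergodic_mds mu theta thinv)
  (P : nat -> T -> 'M[R]_k)
  (hP : transition_cocycle mu theta P) :
  [/\ converges_in_distribution mu P <->
        (exists p, pullback_attractor mu theta thinv P p),
      converges_in_distribution mu P <->
        (exists p, forward_attractor mu theta P p)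
    & forall p1 p2 : T -> 'cV[R]_k,
        (pullback_attractor mu theta thinv P p1 \/ forward_attractor mu theta P p1) ->
        (pullback_attractor mu theta thinv P p2 \/ forward_attractor mu theta P p2) ->
        {ae mu, forall w, p1 w = p2 w}].
Proof.
have k0 : (0 < k)%N by apply: leq_trans hk.
pose i0 : 'I_k := Ordinal k0.
have attrD : forall p,
    (pullback_attractor mu theta thinv P p \/ forward_attractor mu theta P p) ->
    invariant_distribution mu theta P p /\
    {ae mu, forall w, Dd thinv P n w @[n --> \oo] --> 0}.
  move=> p [hp|hp]; split; try by case: hp.
    exact: pull_D hp.
  by apply: (F_D _ _ _ _ hTheta hP); exact: fwd_F hp.
split.
- split.
    move=> /(cid_F mu P).1 hF.
    have hD := F_D _ _ _ _ hTheta hP hF.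
    have [p hp] := construct _ _ _ _ hTheta hP i0 hD.
    exists p; split => // q hq; exact: (attr_x _ _ _ _ hTheta _ hp hD).
  move=> [p hp]; apply/(cid_F mu P).2.
  apply: (D_F _ _ _ _ hTheta hP); exact: pull_D hp.
- split.
    move=> /(cid_F mu P).1 hF.
    have hD := F_D _ _ _ _ hTheta hP hF.
    have [p hp] := construct _ _ _ _ hTheta hP i0 hD.
    by exists p; exact: inv_fwd.
  move=> [p hp]; apply/(cid_F mu P).2; exact: fwd_F hp.
- move=> p1 p2 h1 h2.
  have [i1 hD] := attrD _ h1.
  have [i2 _] := attrD _ h2.
  exact: (attr_unique _ _ _ _ hTheta i0 _ _ i1 i2 hD).
Qed.
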